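(* Consider the two-user two-hop MAC with AF relays under individual power constraints as in the context, and let $\mathcal R_{opt}$ be its optimal AF rate region. (a) If the upper-layer noise dominates, i.e. $W(\mathbf B^{(2)})\ge W(\mathbf B^{(1i)})\ge1$ for $i=0,1,2$, then the region $\mathcal Q=\mathrm{cl}\,\mathrm{conv}\big(\mathcal R(\mathbf B^{(10)})\cup\mathcal R(\mathbf B^{(11)})\cup\mathcal R(\mathbf B^{(12)})\big)$ satisfies $\max_{\mathcal Q}R_1\ge\max_{\mathcal R_{opt}}R_1-\frac12$, $\max_{\mathcal Q}R_2\ge\max_{\mathcal R_{opt}}R_2-\frac12$ and $\max_{\mathcal Q}(R_1+R_2)\ge\max_{\mathcal R_{opt}}(R_1+R_2)-\frac12$. (b) If the lower-layer noise dominates, i.e. $1\ge W(\mathbf B^{(2)})\ge W(\mathbf B^{(1i)})$ for $i=0,1,2$, then the same three inequalities hold with $\mathcal Q=\mathcal R(\mathbf B^{(2)})$.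
   Context: Two sources $S_1,S_2$ with Gaussian inputs of powers $P_{S_1},P_{S_2}>0$, $n$ relays, one destination. Relay $k$ receives $y_k=h_{S_1,k}x_{S_1}+h_{S_2,k}x_{S_2}+z_k$ and sends $\beta_ky_k$; the destination receives $y_D=\mathbf h_1^T\mathbf B\mathbf h_{01}x_{S_1}+\mathbf h_1^T\mathbf B\mathbf h_{02}x_{S_2}+\mathbf h_1^T\mathbf B\mathbf z_1+z_D$, with $\mathbf h_{0i}=(h_{S_i,k})_k$, $\mathbf h_1=(h_{k,D})_k$ positive, $\mathbf B=\mathrm{diag}(\beta_k)$ real, noises i.i.d. $\mathcal N(0,1)$. $\mathbf B$ is feasible if $|\beta_k|\le\beta_k^{Up}:=\sqrt{P_k^{Up}/(1+h_{S_1,k}^2P_{S_1}+h_{S_2,k}^2P_{S_2})}$. Let $\mathcal C(x)=\frac12\log_2(1+x)$, $\mathbf A=P_{S_1}\mathbf h_{01}\mathbf h_{01}^T+P_{S_2}\mathbf h_{02}\mathbf h_{02}^T$, $W(\mathbf B)=\mathbf h_1^T\mathbf B^2\mathbf h_1$. $\mathcal R(\mathbf B)$ is the set of $(R_1,R_2)\ge0$ with $R_1\le\mathcal C\big((\mathbf h_1^T\mathbf B\mathbf h_{01})^2P_{S_1}/(W(\mathbf B)+1)\big)$, $R_2\le\mathcal C\big((\mathbf h_1^T\mathbf B\mathbf h_{02})^2P_{S_2}/(W(\mathbf B)+1)\big)$, $R_1+R_2\le\mathcal C\big(\mathbf h_1^T\mathbf B\mathbf A\mathbf B\mathbf h_1/(W(\mathbf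 B)+1)\big)$; $\mathcal R_{opt}$ is the closure of the convex hull of $\bigcup_{\mathbf B\text{ feasible}}\mathcal R(\mathbf B)$ (time sharing). Let $P_i=\|\mathbf h_{0i}\|^2P_{S_i}$; fix orthonormal $\mathbf u_1,\mathbf u_2$ and $0\le\alpha\le\beta\le\pi/2$ with $\mathbf h_{0i}/\|\mathbf h_{0i}\|$ equal to $\cos\alpha\,\mathbf u_1+\sin\alpha\,\mathbf u_2$ and $\cos\beta\,\mathbf u_1+\sin\beta\,\mathbf u_2$ respectively; let $\phi(\theta)=P_1\cos^2(\theta-\alpha)+P_2\cos^2(\theta-\beta)$ and $\theta_s$ a maximizer of $\phi$ on $[\alpha,\beta]$. For $\theta$, let $\mathbf x_\theta=\cos\theta\,\mathbf u_1+\sin\theta\,\mathbf u_2$ and $\mathbf B_\theta=\mathrm{diag}(c\,x_{\theta,k}/h_{k,D})$ with $c=\min_{k:x_{\theta,k}\ne0}\beta_k^{Up}h_{k,D}/|x_{\theta,k}|$ (feasible, at least one gain at its bound). Set $\mathbf B^{(10)}=\mathbf B_{\theta_s}$, $\mathbf B^{(11)}=\mathbf B_\alpha$, $\mathbf B^{(12)}=\mathbf B_\beta$, and $\mathbf B^{(2)}=\mathrm{diag}(\beta_1^{Up},\dots,\beta_n^{Up})$. *)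

(* Defs.v *)
From HB Require Import structures.
From mathcomp Require Import all_boot all_order all_algebra.
From mathcomp Require Import all_classical all_reals all_analysis.
Set Implicit Arguments. Unset Strict Implicit. Unset Printing Implicit Defensive.
Import Order.TTheory GRing.Theory Num.Theory.
Import numFieldNormedType.Exports.
Local Open Scope classical_set_scope.
Local Open Scope ring_scope.

Section AF.
Variable R : realType.

Definition Cap (x : R) : R := ln (1 + x) / ln 2 / 2.

Definition sc (M : 'M[R]_1) : R := M 0 0.

Definition vnorm n (v : 'cV[R]_n) : R := Num.sqrt (sc (v^T *m v)).

(* A relay gain vector b : 'rV_n encodes B = diag(beta_k) = diag_mx b *)
Definition Wf n (h1 : 'cV[R]_n) (b : 'rV[R]_n) : R :=
  sc (h1^T *m diag_mx b *m diag_mx b *m h1).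

Definition Amat n (PS1 PS2 : R) (h01 h02 : 'cV[R]_n) : 'M[R]_n :=
  PS1 *: (h01 *m h01^T) + PS2 *: (h02 *m h02^T).

Definition rate_region n (PS1 PS2 : R) (h01 h02 h1 : 'cV[R]_n) (b : 'rV[R]_n)
  : set (R * R) :=
  [set p | [/\ 0 <= p.1, 0 <= p.2,
     p.1 <= Cap ((sc (h1^T *m diag_mx b *m h01)) ^+ 2 * PS1 / (Wf h1 b + 1)),
     p.2 <= Cap ((sc (h1^T *m diag_mx b *m h02)) ^+ 2 * PS2 / (Wf h1 b + 1)) &
     p.1 + p.2 <= Cap (sc (h1^T *m diag_mx b *m Amat PS1 PS2 h01 h02
                            *m diag_mx b *m h1) / (Wf h1 b + 1))]].

Definition bup n (PS1 PS2 : R) (PUp : 'I_n -> R) (h01 h02 : 'cV[R]_n) (k : 'I_n) : R :=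
  Num.sqrt (PUp k / (1 + h01 k 0 ^+ 2 * PS1 + h02 k 0 ^+ 2 * PS2)).

Definition feasible n (PS1 PS2 : R) (PUp : 'I_n -> R) (h01 h02 : 'cV[R]_n)
  (b : 'rV[R]_n) : Prop :=
  forall k, `|b 0 k| <= bup PS1 PS2 PUp h01 h02 k.

Definition conv_hull (S : set (R * R)) : set (R * R) :=
  [set p | exists m (w : 'I_m -> R) (x : 'I_m -> R * R),
     [/\ forall i, 0 <= w i, \sum_(i < m) w i = 1, forall i, S (x i) &
         p = (\sum_(i < m) w i * (x i).1, \sum_(i < m) w i * (x i).2)]].

Definition Ropt n (PS1 PS2 : R) (PUp : 'I_n -> R) (h01 h02 h1 : 'cV[R]_n)
  : set (R * R) :=
  closure (conv_hull (\bigcup_(b in feasible PS1 PS2 PUp h01 h02)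
                        rate_region PS1 PS2 h01 h02 h1 b)).

Definition xth n (u1 u2 : 'cV[R]_n) (th : R) : 'cV[R]_n :=
  cos th *: u1 + sin th *: u2.

Definition Bth n (PS1 PS2 : R) (PUp : 'I_n -> R) (h01 h02 h1 : 'cV[R]_n)
  (u1 u2 : 'cV[R]_n) (th : R) : 'rV[R]_n :=
  let x := xth u1 u2 th in
  let c := inf [set bup PS1 PS2 PUp h01 h02 k * h1 k 0 / `|x k 0|
                | k in [set k | x k 0 != 0]] in
  \row_k (c * x k 0 / h1 k 0).

Definition B2 n (PS1 PS2 : R) (PUp : 'I_n -> R) (h01 h02 : 'cV[R]_n) : 'rV[R]_n :=
  \row_k bup PS1 PS2 PUp h01 h02 k.

Definition maxR1 (Q : set (R * R)) : R := sup [set p.1 | p in Q].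
Definition maxR2 (Q : set (R * R)) : R := sup [set p.2 | p in Q].
Definition maxRsum (Q : set (R * R)) : R := sup [set p.1 + p.2 | p in Q].

End AF.

(* Main.v *)
Require Import Defs.
From HB Require Import structures.
From mathcomp Require Import all_boot all_order all_algebra.
From mathcomp Require Import all_classical all_reals all_analysis.
From mathcomp.algebra_tactics Require Import ring lra.
Import Order.TTheory GRing.Theory Num.Theory.
Import numFieldNormedType.Exports.
Local Open Scope classical_set_scope.
Local Open Scope ring_scope.





Lemma scdB {R : realType} {n : nat} (h1 v : 'cV[R]_n) (b : 'rV[R]_n) : sc (h1^T *m diag_mx b *m v) = \sum_k h1 k 0 * b 0 k * v k 0.
Proof. rewrite /sc mul_mx_diag !mxE; apply: eq_bigr => k _; rewrite !mxE. done. Qed.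

Lemma WfE {R : realType} {n : nat} (h1 : 'cV[R]_n) (b : 'rV[R]_n) : Wf h1 b = \sum_k (h1 k 0 * b 0 k) ^+ 2.
Proof. rewrite /Wf /sc !mul_mx_diag !mxE; apply: eq_bigr => k _; rewrite !mxE; ring. Qed.

Lemma sc_mul {R : realType} {n : nat} (X : 'M[R]_(1, n)) (Y : 'M[R]_(n, 1)) : sc (X *m Y) = \sum_k X 0 k * Y k 0.
Proof. by rewrite /sc mxE. Qed.

Lemma sc11 {R : realType} {n : nat} (X Y : 'M[R]_1) : sc (X *m Y) = sc X * sc Y.
Proof. by rewrite /sc mxE big_ord1. Qed.

Lemma scAE {R : realType} {n : nat} (PS1 PS2 : R) (h01 h02 h1 : 'cV[R]_n) (b : 'rV[R]_n) :
  sc (h1^T *m diag_mx b *m Amat PS1 PS2 h01 h02 *m diag_mx b *m h1) =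
  PS1 * (sc (h1^T *m diag_mx b *m h01)) ^+ 2 + PS2 * (sc (h1^T *m diag_mx b *m h02)) ^+ 2.
Proof.
set M := h1^T *m diag_mx b.
have NE : diag_mx b *m h1 = M^T by rewrite /M trmx_mul trmxK tr_diag_mx.
rewrite -mulmxA NE /Amat mulmxDr mulmxDl -!scalemxAr -!scalemxAl !mulmxA.
idtac.
have HT (v : 'cV[R]_n) : v^T *m M^T = (M *m v)^T by exact: (esym (trmx_mul M v)).
rewrite -[M *m h01 *m h01^T *m M^T]mulmxA -[M *m h02 *m h02^T *m M^T]mulmxA !HT.
rewrite /sc !mxE !big_ord1 !mxE.
ring.
Qed.


Definition kC {R : realType} : R := (ln (2:R))^-1 / 2.
Lemma ln2_gt0 {R : realType} : 0 < ln (2:R). Proof. apply: ln_gt0; lra. Qed.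
Lemma k_gt0 {R : realType} : 0 < kC :> R. Proof. rewrite /kC; apply: divr_gt0 => //; rewrite invr_gt0; exact: (@ln2_gt0 R). Qed.
Lemma CapE {R : realType} (x : R) : Cap x = ln (1 + x) * kC.
Proof. by rewrite /Cap /kC mulrA. Qed.
Lemma lnk {R : realType} : ln 2 * kC = 1 / 2 :> R.
Proof. rewrite /kC mulrA mulfV ?div1r //; have := @ln2_gt0 R; lra. Qed.

Lemma Cap_le {R : realType} (x y : R) : 0 <= x -> x <= y -> Cap x <= Cap y.
Proof.
move=> x0 xy; rewrite !CapE ler_pM2r ?k_gt0 // ler_ln ?posrE; lra.
Qed.
Lemma Cap_ge0 {R : realType} (x : R) : 0 <= x -> 0 <= Cap x.
Proof. move=> x0; have := @Cap_le R 0 x (lexx 0) x0; rewrite CapE addr0 ln1 mul0r //. Qed.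
Lemma Cap_half {R : realType} (x y : R) : 0 <= x -> 0 <= y -> x <= 2 * y -> Cap x - 1 / 2 <= Cap y.
Proof.
move=> x0 y0 xy; rewrite !CapE -lnk -mulrBl ler_pM2r ?k_gt0 //.
rewrite lerBlDl -lnM ?posrE; try lra.
rewrite ler_ln ?posrE; lra.
Qed.
Lemma Cap_sub {R : realType} (x y : R) : 0 <= x -> 0 <= y -> Cap (x + y) <= Cap x + Cap y.
Proof.
move=> x0 y0; rewrite !CapE -mulrDl ler_pM2r ?k_gt0 //.
rewrite -lnM ?posrE; try lra.
rewrite ler_ln ?posrE; nra.
Qed.


Lemma core2 {R : realType} (P1 P2 al be ths c s : R) :
  0 <= P1 -> 0 <= P2 -> al <= be -> be <= al + pi / 2 ->
  (forall th, al <= th -> th <= be ->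
     P1 * cos (th - al) ^+ 2 + P2 * cos (th - be) ^+ 2 <=
     P1 * cos (ths - al) ^+ 2 + P2 * cos (ths - be) ^+ 2) ->
  0 <= c -> 0 <= s ->
  P1 * c ^+ 2 + P2 * (c * cos (be - al) + s * sin (be - al)) ^+ 2 <=
  (c ^+ 2 + s ^+ 2) * (P1 * cos (ths - al) ^+ 2 + P2 * cos (ths - be) ^+ 2).
Proof.
move=> P10 P20 ab bpi Hmax c0 s0.
set phis := P1 * cos (ths - al) ^+ 2 + P2 * cos (ths - be) ^+ 2.
set d := be - al.
have pi0 : 0 < pi :> R := pi_gt0 R.
have d0 : 0 <= d by rewrite /d; lra.
have dpi : d <= pi / 2 by rewrite /d; lra.
have cd0 : 0 <= cos d by apply: cos_ge0_pihalf; lra.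
have sd0 : 0 <= sin d by apply: sin_ge0_pi; lra.
have cs := cos2Dsin2 d.
set r2 := c ^+ 2 + s ^+ 2.
have phis0 : 0 <= phis.
  by rewrite /phis; apply: addr_ge0; apply: mulr_ge0 => //; apply: sqr_ge0.
have [r20|r2n0] := eqVneq r2 0.
  have c00 : c = 0 by rewrite /r2 in r20; nra.
  have s00 : s = 0 by rewrite /r2 in r20; nra.
  rewrite c00 s00; nra.
have r2p : 0 < r2 by rewrite /r2 in r2n0 *; rewrite lt_def r2n0 /=; nra.
set r := Num.sqrt r2.
have rp : 0 < r by rewrite sqrtr_gt0.
have rr : r ^+ 2 = r2 by rewrite sqr_sqrtr // ltW.
set x := c / r.
have xc : x * r = c by rewrite /x divfK // gt_eqF.
have x0 : 0 <= x by rewrite /x divr_ge0 // ltW.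
have x1 : x <= 1.
  rewrite /x ler_pdivrMr // mul1r.
  rewrite -(ger0_norm c0) -(ger0_norm (ltW rp)) -ler_sqr ?normr_ge0 // !real_normK ?num_real //.
  rewrite rr /r2; nra.
have [xd|xd] := lerP (cos d) x.
-
  set t := acos x.
  have xin : x \in `[(-1), 1] by rewrite in_itv /=; apply/andP; split; lra.
  have ct : cos t = x by rewrite /t acosK.
  have st : sin t = s / r.
    rewrite /t sin_acos; last by apply/andP; split; lra.
    have sr0 : 0 <= s / r by rewrite divr_ge0 // ltW.
    apply/eqP; rewrite -(eqrXn2 (n:=2)) // ?sqrtr_ge0 //.
    rewrite sqr_sqrtr; last by rewrite subr_ge0; nra.
    apply/eqP; rewrite expr_div_n rr /x expr_div_n rr /r2.
    field; rewrite -/r2; exact: r2n0.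
  have t0 : 0 <= t by rewrite /t acos_ge0 //; apply/andP; split; lra.
  have tpi : t <= pi by rewrite /t acos_lepi //; apply/andP; split; lra.
  have td : t <= d.
    rewrite leNgt; apply/negP => dt.
    have : cos t < cos d.
      by rewrite ltr_cos // in_itv /=; apply/andP; split; lra.
    lra.
  have := Hmax (al + t); rewrite -/phis.
  have -> : al + t - al = t by ring.
  have -> : al + t - be = t - d by rewrite /d; ring.
  rewrite cosB ct st => H.
  have H' := H ltac:(lra) ltac:(rewrite /d in td; lra).
  have -> : P1 * c ^+ 2 + P2 * (c * cos d + s * sin d) ^+ 2 =
     r2 * (P1 * x ^+ 2 + P2 * (x * cos d + s / r * sin d) ^+ 2).
    rewrite -rr -xc; field; rewrite gt_eqF //.
  by rewrite ler_wpM2l // ltW.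
-
  have := Hmax be; rewrite -/phis subrr cos0 -/d.
  move=> H; have H' := H ab (lexx _).
  apply: le_trans (_ : r2 * (P1 * cos d ^+ 2 + P2 * 1 ^+ 2) <= _); last first.
    by rewrite ler_wpM2l // ltW.
  have c2 : c ^+ 2 <= r2 * cos d ^+ 2.
    rewrite -xc -rr; have : x ^+ 2 <= cos d ^+ 2 by rewrite ler_sqr //; lra.
    nra.
  have cs2 : (c * cos d + s * sin d) ^+ 2 <= r2.
    rewrite /r2; have := sqr_ge0 (c * sin d - s * cos d); nra.
  nra.
Qed.


Lemma sum_lin {R : realType} {n : nat} (f g : 'I_n -> R) (t : R) :
  \sum_k (f k - t * g k) = \sum_k f k - t * \sum_k g k.
Proof. by rewrite sumrB mulr_sumr. Qed.

Lemma sum_sq_exp {R : realType} {n : nat} (f g : 'I_n -> R) t :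
  \sum_k (f k - t * g k) ^+ 2 =
  \sum_k f k ^+ 2 - 2 * t * \sum_k f k * g k + t ^+ 2 * \sum_k g k ^+ 2.
Proof.
rewrite (eq_bigr (fun k => f k ^+ 2 + (- (2 * t)) * (f k * g k) + t ^+ 2 * g k ^+ 2));
  last by move=> k _; ring.
rewrite !big_split /= -!mulr_sumr; ring.
Qed.

Lemma CSu {R : realType} {n : nat} (f g : 'I_n -> R) : \sum_k g k ^+ 2 = 1 ->
  (\sum_k f k * g k) ^+ 2 <= \sum_k f k ^+ 2.
Proof.
move=> g1.
have := sum_sq_exp f g (\sum_k f k * g k); rewrite g1.
have : 0 <= \sum_k (f k - (\sum_k f k * g k) * g k) ^+ 2 by apply: sumr_ge0 => k _; apply: sqr_ge0.
nra.
Qed.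

Lemma bessel {R : realType} {n : nat} (y u1 u2 : 'I_n -> R) :
  \sum_k u1 k ^+ 2 = 1 -> \sum_k u2 k ^+ 2 = 1 -> \sum_k u1 k * u2 k = 0 ->
  (\sum_k y k * u1 k) ^+ 2 + (\sum_k y k * u2 k) ^+ 2 <= \sum_k y k ^+ 2.
Proof.
move=> h1 h2 h12.
set p := \sum_k y k * u1 k; set q := \sum_k y k * u2 k.
have := sum_sq_exp (fun k => y k - p * u1 k) u2 q.
rewrite /= (sum_sq_exp y u1 p) h1 h2.
have -> : \sum_k (y k - p * u1 k) * u2 k = \sum_k (y k * u2 k - p * (u1 k * u2 k)).
  by apply: eq_bigr => k _; ring.
rewrite sum_lin h12 -/q -/p.
have : 0 <= \sum_k (y k - p * u1 k - q * u2 k) ^+ 2 by apply: sumr_ge0 => k _; apply: sqr_ge0.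
nra.
Qed.

Lemma sum_bil {R : realType} {n : nat} (u1 u2 : 'I_n -> R) a b c d :
  \sum_k (a * u1 k + b * u2 k) * (c * u1 k + d * u2 k) =
  a * c * \sum_k u1 k ^+ 2 + (a * d + b * c) * \sum_k u1 k * u2 k + b * d * \sum_k u2 k ^+ 2.
Proof.
rewrite (eq_bigr (fun k => a * c * u1 k ^+ 2 + (a * d + b * c) * (u1 k * u2 k) + b * d * u2 k ^+ 2));
  last by move=> k _; ring.
by rewrite !big_split /= -!mulr_sumr.
Qed.

Lemma sum_lin2 {R : realType} {n : nat} (y u1 u2 : 'I_n -> R) a b :
  \sum_k y k * (a * u1 k + b * u2 k) = a * \sum_k y k * u1 k + b * \sum_k y k * u2 k.
Proof.
rewrite (eq_bigr (fun k => a * (y k * u1 k) + b * (y k * u2 k))); last by move=> k _; ring.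
by rewrite big_split /= -!mulr_sumr.
Qed.



Lemma contL {R : realType} (k1 k2 : R) : continuous (fun p : R * R => k1 * p.1 + k2 * p.2).
Proof.
move=> [x y]; apply: cvgD; apply: cvgMr; [exact: cvg_fst | exact: cvg_snd].
Qed.

Lemma hull_bound {R : realType} (S : set (R * R)) (f : R * R -> R) (k1 k2 M : R) :
  (forall p, f p = k1 * p.1 + k2 * p.2) ->
  (forall p, S p -> f p <= M) ->
  forall p, closure (conv_hull S) p -> f p <= M.
Proof.
move=> Hf HS.
have fE : f = (fun p : R * R => k1 * p.1 + k2 * p.2) by apply: funext => p; exact: Hf.
have cl : closed [set p : R * R | f p <= M].
  rewrite fE.
  have -> : [set p : R * R | k1 * p.1 + k2 * p.2 <= M] =
    (fun p : R * R => k1 * p.1 + k2 * p.2) @^-1` [set x | x <= M] by [].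
  apply: preimage_closed; last exact: closed_le.
  by move=> p _; exact: contL.
have sub : conv_hull S `<=` [set p | f p <= M].
  move=> p [m [w [x [w0 w1 Sx ->]]]] /=.
  rewrite Hf !mulr_sumr -big_split /=.
  apply: le_trans (_ : \sum_(i < m) w i * M <= _); last by rewrite -mulr_suml w1 mul1r.
  apply: ler_sum => i _.
  have := HS _ (Sx i); rewrite Hf => h.
  have -> : k1 * (w i * (x i).1) + k2 * (w i * (x i).2) = w i * (k1 * (x i).1 + k2 * (x i).2) by ring.
  by rewrite ler_wpM2l.
move=> p; move/closureS: sub => /(_ p) h /h.
by rewrite -(closure_id _).1.
Qed.

Lemma sup_final {R : realType} (U Q : set (R * R)) (f : R * R -> R) (k1 k2 M M' : R) (u0 p0 : R * R) :
  (forall p, f p = k1 * p.1 + k2 * p.2) ->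
  (forall p, U p -> f p <= M) -> U u0 ->
  Q p0 -> (forall p, Q p -> f p <= M') -> M - 1 / 2 <= f p0 ->
  sup [set f p | p in closure (conv_hull U)] - 1 / 2 <= sup [set f p | p in Q].
Proof.
move=> Hf HU U0 Q0 HQ Hp0.
have h1 : sup [set f p | p in closure (conv_hull U)] <= M.
  apply: ge_sup.
    exists (f u0); exists u0 => //; apply: subset_closure.
    exists 1%N, (fun _ => 1), (fun _ => u0); split.
    - by move=> i; lra.
    - by rewrite big_ord1.
    - by [].
    - by rewrite !big_ord1 !mul1r; case: u0 {U0}.
  move=> _ [p Hp <-]; exact: hull_bound Hf HU p Hp.
have h2 : f p0 <= sup [set f p | p in Q].
  apply: ub_le_sup; last by exists p0.
  by exists M' => _ [p Hp <-]; exact: HQ.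
lra.
Qed.


Definition Nv {R : realType} {n : nat} (h1 v : 'cV[R]_n) (b : 'rV[R]_n) : R :=
  \sum_k h1 k 0 * b 0 k * v k 0.
Definition Wv {R : realType} {n : nat} (h1 : 'cV[R]_n) (b : 'rV[R]_n) : R :=
  \sum_k (h1 k 0 * b 0 k) ^+ 2.
Definition X1v {R : realType} {n : nat} (PS : R) (h1 v : 'cV[R]_n) (b : 'rV[R]_n) : R :=
  Nv h1 v b ^+ 2 * PS / (Wv h1 b + 1).

Lemma Wv_ge0 {R : realType} {n : nat} (h1 : 'cV[R]_n) b : 0 <= Wv h1 b.
Proof. by apply: sumr_ge0 => k _; apply: sqr_ge0. Qed.

Lemma X1v_ge0 {R : realType} {n : nat} (PS : R) (h1 v : 'cV[R]_n) b :
  0 <= PS -> 0 <= X1v PS h1 v b.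
Proof.
move=> P0; rewrite /X1v; apply: divr_ge0; first by apply: mulr_ge0 => //; apply: sqr_ge0.
have := Wv_ge0 h1 b; lra.
Qed.

Lemma RR_iff {R : realType} {n : nat} (PS1 PS2 : R) (h01 h02 h1 : 'cV[R]_n) b p :
  rate_region PS1 PS2 h01 h02 h1 b p <->
  [/\ 0 <= p.1, 0 <= p.2, p.1 <= Cap (X1v PS1 h1 h01 b), p.2 <= Cap (X1v PS2 h1 h02 b)
    & p.1 + p.2 <= Cap (X1v PS1 h1 h01 b + X1v PS2 h1 h02 b)].
Proof.
rewrite /rate_region /= scAE !scdB WfE.
have -> : (PS1 * Nv h1 h01 b ^+ 2 + PS2 * Nv h1 h02 b ^+ 2) / (Wv h1 b + 1) =
          X1v PS1 h1 h01 b + X1v PS2 h1 h02 b by rewrite /X1v; ring.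
by [].
Qed.

Lemma RR_pts {R : realType} {n : nat} (PS1 PS2 : R) (h01 h02 h1 : 'cV[R]_n) b :
  0 <= PS1 -> 0 <= PS2 ->
  let X1 := X1v PS1 h1 h01 b in let X2 := X1v PS2 h1 h02 b in
  let RR := rate_region PS1 PS2 h01 h02 h1 b in
  [/\ RR (0, 0), RR (Cap X1, 0), RR (0, Cap X2) & RR (Cap X1, Cap (X1 + X2) - Cap X1)].
Proof.
move=> P1 P2 X1 X2 RR.
have x1 : 0 <= X1 by exact: X1v_ge0.
have x2 : 0 <= X2 by exact: X1v_ge0.
have c1 := Cap_ge0 _ x1; have c2 := Cap_ge0 _ x2.
have c12 : Cap X1 <= Cap (X1 + X2) by apply: Cap_le => //; lra.
have c21 : Cap X2 <= Cap (X1 + X2) by apply: Cap_le => //; lra.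
have cs := Cap_sub _ _ x1 x2.
split; apply/RR_iff; split => /=; lra.
Qed.

Lemma RR_f_le {R : realType} {n : nat} (PS1 PS2 : R) (h01 h02 h1 : 'cV[R]_n) b p k1 k2 :
  0 <= k1 <= 1 -> 0 <= k2 <= 1 -> rate_region PS1 PS2 h01 h02 h1 b p ->
  k1 * p.1 + k2 * p.2 <= Cap (X1v PS1 h1 h01 b + X1v PS2 h1 h02 b).
Proof.
move=> /andP[k10 k11] /andP[k20 k21] /RR_iff [p1 p2 _ _ ps].
apply: le_trans ps; nra.
Qed.

Lemma in_clhull {R : realType} (S : set (R * R)) p : S p -> closure (conv_hull S) p.
Proof.
move=> Sp; apply: subset_closure.
exists 1%N, (fun _ => 1), (fun _ => p); split.
- by move=> i; lra.
- by rewrite big_ord1.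
- by [].
- by rewrite !big_ord1 !mul1r; case: p {Sp}.
Qed.

Lemma feas0 {R : realType} {n : nat} (PS1 PS2 : R) PUp (h01 h02 : 'cV[R]_n) :
  feasible PS1 PS2 PUp h01 h02 0.
Proof. by move=> k; rewrite mxE normr0 /bup sqrtr_ge0. Qed.

Lemma wrap {R : realType} {n : nat} (PS1 PS2 : R) PUp (h01 h02 h1 : 'cV[R]_n)
  (Q : set (R * R)) (f : R * R -> R) (k1 k2 M M' : R) (p0 : R * R) :
  0 <= PS1 -> 0 <= PS2 -> (forall p, f p = k1 * p.1 + k2 * p.2) ->
  (forall b p, feasible PS1 PS2 PUp h01 h02 b -> rate_region PS1 PS2 h01 h02 h1 b p -> f p <= M) ->
  Q p0 -> (forall p, Q p -> f p <= M') -> M - 1 / 2 <= f p0 ->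
  sup [set f p | p in Ropt PS1 PS2 PUp h01 h02 h1] - 1 / 2 <= sup [set f p | p in Q].
Proof.
move=> P1 P2 Hf HU Q0 HQ Hp0.
apply: (@sup_final R _ Q f k1 k2 M M' (0, 0) p0 Hf _ _ Q0 HQ Hp0).
- by move=> p [b Fb Rb]; exact: HU Fb Rb.
- exists 0; first exact: feas0.
  by case: (@RR_pts R n PS1 PS2 h01 h02 h1 0 P1 P2).
Qed.

Lemma Qbound3 {R : realType} {n : nat} (PS1 PS2 : R) (h01 h02 h1 : 'cV[R]_n) B10 B11 B12
   (f : R * R -> R) k1 k2 :
  0 <= PS1 -> 0 <= PS2 -> (forall p, f p = k1 * p.1 + k2 * p.2) ->
  0 <= k1 <= 1 -> 0 <= k2 <= 1 ->
  let X b := X1v PS1 h1 h01 b + X1v PS2 h1 h02 b in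
  let RR := rate_region PS1 PS2 h01 h02 h1 in
  forall p, closure (conv_hull (RR B10 `|` RR B11 `|` RR B12)) p ->
   f p <= Cap (X B10) + Cap (X B11) + Cap (X B12).
Proof.
move=> P1 P2 Hf hk1 hk2 X RR; apply: (@hull_bound R _ f k1 k2 _ Hf) => p.
have g b : 0 <= Cap (X b).
  by apply: Cap_ge0; apply: addr_ge0; apply: X1v_ge0.
have := g B10; have := g B11; have := g B12 => ga gb gc Hp.
rewrite Hf; case: Hp => [[H|H]|H].
- have := RR_f_le _ _ _ _ _ _ _ _ _ hk1 hk2 H; rewrite -/(X B10); lra.
- have := RR_f_le _ _ _ _ _ _ _ _ _ hk1 hk2 H; rewrite -/(X B11); lra.
- have := RR_f_le _ _ _ _ _ _ _ _ _ hk1 hk2 H; rewrite -/(X B12); lra.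
Qed.


Lemma core_pq {R : realType} (P1 P2 al be ths p q : R) :
  0 <= P1 -> 0 <= P2 -> al <= be -> be <= al + pi / 2 ->
  (forall th, al <= th -> th <= be ->
     P1 * cos (th - al) ^+ 2 + P2 * cos (th - be) ^+ 2 <=
     P1 * cos (ths - al) ^+ 2 + P2 * cos (ths - be) ^+ 2) ->
  P1 * (cos al * p + sin al * q) ^+ 2 + P2 * (cos be * p + sin be * q) ^+ 2 <=
  (p ^+ 2 + q ^+ 2) * (P1 * cos (ths - al) ^+ 2 + P2 * cos (ths - be) ^+ 2).
Proof.
move=> P10 P20 ab bpi Hmax.
set c' := cos al * p + sin al * q; set s' := cos al * q - sin al * p.
have h := cos2Dsin2 al.
have E1 : cos be * p + sin be * q = c' * cos (be - al) + s' * sin (be - al).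
  rewrite cosB sinB /c' /s'.
  transitivity ((cos be * p + sin be * q) * (cos al ^+ 2 + sin al ^+ 2)); first by rewrite h mulr1.
  ring.
have E2 : p ^+ 2 + q ^+ 2 = c' ^+ 2 + s' ^+ 2.
  rewrite /c' /s'.
  transitivity ((p ^+ 2 + q ^+ 2) * (cos al ^+ 2 + sin al ^+ 2)); first by rewrite h mulr1.
  ring.
rewrite E1 E2.
have pi0 : 0 < pi :> R := pi_gt0 R.
have cd0 : 0 <= cos (be - al) by apply: cos_ge0_pihalf; lra.
have sd0 : 0 <= sin (be - al) by apply: sin_ge0_pi; lra.
have := core2 _ _ _ _ _ _ _ P10 P20 ab bpi Hmax (normr_ge0 c') (normr_ge0 s').
rewrite !real_normK ?num_real //.
have : `|c' * cos (be - al) + s' * sin (be - al)| <= `|c'| * cos (be - al) + `|s'| * sin (be - al).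
  apply: le_trans (ler_normD _ _) _.
  by rewrite !normrM (ger0_norm cd0) (ger0_norm sd0).
rewrite ler_norml => /andP[l1 l2].
move: l1 l2.
set A := `|c'| * _ + _.
set x := c' * _ + _ => l1 l2.
have : x ^+ 2 <= A ^+ 2.
  have g1 : 0 <= A - x by lra.
  have g2 : 0 <= A + x by lra.
  have := mulr_ge0 g1 g2; nra.
nra.
Qed.

Lemma Nv_xth {R : realType} {n : nat} (h1 v u1 u2 : 'cV[R]_n) b (m th : R) :
  (forall k, v k 0 = m * (cos th * u1 k 0 + sin th * u2 k 0)) ->
  Nv h1 v b = m * (cos th * Nv h1 u1 b + sin th * Nv h1 u2 b).
Proof.
move=> E; rewrite /Nv (eq_bigr (fun k => m * cos th * (h1 k 0 * b 0 k * u1 k 0)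
   + m * sin th * (h1 k 0 * b 0 k * u2 k 0))); last by move=> k _; rewrite E; ring.
rewrite big_split /= -!mulr_sumr; ring.
Qed.

Lemma bessel_b {R : realType} {n : nat} (h1 u1 u2 : 'cV[R]_n) b :
  \sum_k u1 k 0 ^+ 2 = 1 -> \sum_k u2 k 0 ^+ 2 = 1 -> \sum_k u1 k 0 * u2 k 0 = 0 ->
  Nv h1 u1 b ^+ 2 + Nv h1 u2 b ^+ 2 <= Wv h1 b.
Proof.
move=> o1 o2 o12.
exact: (bessel (fun k => h1 k 0 * b 0 k) (fun k => u1 k 0) (fun k => u2 k 0) o1 o2 o12).
Qed.

Lemma X1_le_a {R : realType} {n : nat} (PS : R) (h1 v u1 u2 : 'cV[R]_n) b m th :
  0 <= PS -> \sum_k u1 k 0 ^+ 2 = 1 -> \sum_k u2 k 0 ^+ 2 = 1 -> \sum_k u1 k 0 * u2 k 0 = 0 ->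
  (forall k, v k 0 = m * (cos th * u1 k 0 + sin th * u2 k 0)) ->
  X1v PS h1 v b <= m ^+ 2 * PS.
Proof.
move=> P0 o1 o2 o12 E.
have B := bessel_b h1 u1 u2 b o1 o2 o12.
have W0 := Wv_ge0 h1 b.
rewrite /X1v (Nv_xth _ _ _ _ _ _ _ E) ler_pdivrMr; last lra.
move: B; set p := Nv h1 u1 b; set q := Nv h1 u2 b => B.
have h := cos2Dsin2 th.
have cs : (cos th * p + sin th * q) ^+ 2 <= p ^+ 2 + q ^+ 2.
  have : (cos th * p + sin th * q) ^+ 2 + (cos th * q - sin th * p) ^+ 2 = p ^+ 2 + q ^+ 2.
    transitivity ((p ^+ 2 + q ^+ 2) * (cos th ^+ 2 + sin th ^+ 2)); last by rewrite h mulr1.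
    ring.
  have := sqr_ge0 (cos th * q - sin th * p); lra.
have m0 : 0 <= m ^+ 2 * PS by apply: mulr_ge0 => //; apply: sqr_ge0.
have -> : (m * (cos th * p + sin th * q)) ^+ 2 * PS = m ^+ 2 * PS * (cos th * p + sin th * q) ^+ 2
  by ring.
rewrite ler_wpM2l //; lra.
Qed.

Lemma Xsum_le_a {R : realType} {n : nat} (PS1 PS2 : R) (h01 h02 h1 u1 u2 : 'cV[R]_n) b
   n1 n2 al be ths :
  0 <= PS1 -> 0 <= PS2 ->
  \sum_k u1 k 0 ^+ 2 = 1 -> \sum_k u2 k 0 ^+ 2 = 1 -> \sum_k u1 k 0 * u2 k 0 = 0 ->
  (forall k, h01 k 0 = n1 * (cos al * u1 k 0 + sin al * u2 k 0)) ->
  (forall k, h02 k 0 = n2 * (cos be * u1 k 0 + sin be * u2 k 0)) ->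
  al <= be -> be <= al + pi / 2 ->
  let phi := fun th => n1 ^+ 2 * PS1 * cos (th - al) ^+ 2 + n2 ^+ 2 * PS2 * cos (th - be) ^+ 2 in
  (forall th, al <= th -> th <= be -> phi th <= phi ths) ->
  X1v PS1 h1 h01 b + X1v PS2 h1 h02 b <= phi ths.
Proof.
move=> P1 P2 o1 o2 o12 E1 E2 ab bpi phi Hmax.
have B := bessel_b h1 u1 u2 b o1 o2 o12.
have W0 := Wv_ge0 h1 b.
have Q1 : 0 <= n1 ^+ 2 * PS1 by apply: mulr_ge0 => //; apply: sqr_ge0.
have Q2 : 0 <= n2 ^+ 2 * PS2 by apply: mulr_ge0 => //; apply: sqr_ge0.
set p := Nv h1 u1 b in B *; set q := Nv h1 u2 b in B *.
have H : n1 ^+ 2 * PS1 * (cos al * p + sin al * q) ^+ 2 + n2 ^+ 2 * PS2 * (cos be * p + sin be * q) ^+ 2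
   <= (p ^+ 2 + q ^+ 2) * phi ths := core_pq _ _ _ _ _ p q Q1 Q2 ab bpi Hmax.
have f0 : 0 <= phi ths.
  rewrite /phi; apply: addr_ge0; apply: mulr_ge0 => //; apply: sqr_ge0.
rewrite /X1v (Nv_xth _ _ _ _ _ _ _ E1) (Nv_xth _ _ _ _ _ _ _ E2) -/p -/q.
clearbody phi p q.
set W := Wv h1 b in B W0 *.
clearbody W.
have Wp : 0 < W + 1 by lra.
rewrite -mulrDl ler_pdivrMr //.
have G : (p ^+ 2 + q ^+ 2) * phi ths <= (W + 1) * phi ths by rewrite ler_wpM2r //; lra.
have -> : (n1 * (cos al * p + sin al * q)) ^+ 2 * PS1 + (n2 * (cos be * p + sin be * q)) ^+ 2 * PS2
   = n1 ^+ 2 * PS1 * (cos al * p + sin al * q) ^+ 2 + n2 ^+ 2 * PS2 * (cos be * p + sin be * q) ^+ 2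
   by ring.
rewrite [phi ths * _]mulrC; exact: le_trans H G.
Qed.

Lemma Bth_y {R : realType} {n : nat} (PS1 PS2 : R) PUp (h01 h02 h1 u1 u2 : 'cV[R]_n) th :
  (forall k, 0 < h1 k 0) ->
  exists c, forall k, h1 k 0 * Bth PS1 PS2 PUp h01 h02 h1 u1 u2 th 0 k =
                   c * (cos th * u1 k 0 + sin th * u2 k 0).
Proof.
move=> hp; rewrite /Bth; set c := inf _; exists c => k; rewrite mxE /xth !mxE.
have := hp k => hk.
field; exact: lt0r_neq0.
Qed.

Lemma Bth_vals {R : realType} {n : nat} (h1 u1 u2 : 'cV[R]_n) (b : 'rV[R]_n) (c a s : R) :
  \sum_k u1 k 0 ^+ 2 = 1 -> \sum_k u2 k 0 ^+ 2 = 1 -> \sum_k u1 k 0 * u2 k 0 = 0 ->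
  (forall k, h1 k 0 * b 0 k = c * (a * u1 k 0 + s * u2 k 0)) ->
  [/\ Nv h1 u1 b = c * a, Nv h1 u2 b = c * s & Wv h1 b = c ^+ 2 * (a ^+ 2 + s ^+ 2)].
Proof.
move=> o1 o2 o12 H.
have S := sum_bil (fun k => u1 k 0) (fun k => u2 k 0).
rewrite /= o1 o2 o12 in S.
split.
- rewrite /Nv (eq_bigr (fun k => (c * a * u1 k 0 + c * s * u2 k 0) * (1 * u1 k 0 + 0 * u2 k 0)));
    last by move=> k _; rewrite H; ring.
  rewrite S; ring.
- rewrite /Nv (eq_bigr (fun k => (c * a * u1 k 0 + c * s * u2 k 0) * (0 * u1 k 0 + 1 * u2 k 0)));
    last by move=> k _; rewrite H; ring.
  rewrite S; ring.
- rewrite /Wv (eq_bigr (fun k => (c * a * u1 k 0 + c * s * u2 k 0) * (c * a * u1 k 0 + c * s * u2 k 0)));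
    last by move=> k _; rewrite H; ring.
  rewrite S; ring.
Qed.

Lemma Nv_B2 {R : realType} {n : nat} (PS1 PS2 : R) PUp (h01 h02 h1 v : 'cV[R]_n) b :
  (forall k, 0 < h1 k 0) -> (forall k, 0 < v k 0) -> feasible PS1 PS2 PUp h01 h02 b ->
  Nv h1 v b ^+ 2 <= Nv h1 v (B2 PS1 PS2 PUp h01 h02) ^+ 2.
Proof.
move=> hp vp F.
have : `|Nv h1 v b| <= Nv h1 v (B2 PS1 PS2 PUp h01 h02).
  rewrite /Nv; apply: le_trans (ler_norm_sum _ _ _) _.
  apply: ler_sum => k _; rewrite /B2 mxE !normrM (gtr0_norm (hp k)) (gtr0_norm (vp k)).
  rewrite ler_wpM2r ?(ltW (vp k)) // ler_wpM2l ?(ltW (hp k)) //.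
rewrite ler_norml; move: (Nv h1 v b) (Nv h1 v (B2 PS1 PS2 PUp h01 h02)) => x A /andP[l1 l2].
have g1 : 0 <= A - x by lra.
have g2 : 0 <= A + x by lra.
have := mulr_ge0 g1 g2; nra.
Qed.


Lemma X1_le_num {R : realType} {n : nat} (PS : R) (h1 v : 'cV[R]_n) b :
  0 <= PS -> X1v PS h1 v b <= Nv h1 v b ^+ 2 * PS.
Proof.
move=> P0; have W0 := Wv_ge0 h1 b.
rewrite /X1v ler_pdivrMr; last lra.
have : 0 <= Nv h1 v b ^+ 2 * PS by apply: mulr_ge0 => //; apply: sqr_ge0.
move: (Nv h1 v b ^+ 2 * PS) => x x0; nra.
Qed.

Lemma X1_ge_half {R : realType} {n : nat} (PS : R) (h1 v : 'cV[R]_n) b :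
  0 <= PS -> Wv h1 b <= 1 -> Nv h1 v b ^+ 2 * PS <= 2 * X1v PS h1 v b.
Proof.
move=> P0 W1; have W0 := Wv_ge0 h1 b.
rewrite /X1v mulrA ler_pdivlMr; last lra.
have : 0 <= Nv h1 v b ^+ 2 * PS by apply: mulr_ge0 => //; apply: sqr_ge0.
move: (Nv h1 v b ^+ 2 * PS) => x x0; nra.
Qed.

Theorem theorem6 (R : realType) (n : nat)
  (PS1 PS2 : R) (PUp : 'I_n -> R) (h01 h02 h1 : 'cV[R]_n)
  (u1 u2 : 'cV[R]_n) (al be ths : R) :
  0 < PS1 -> 0 < PS2 ->
  (forall k, 0 < PUp k) ->
  (forall k, 0 < h01 k 0) -> (forall k, 0 < h02 k 0) -> (forall k, 0 < h1 k 0) ->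
  (* u1, u2 orthonormal *)
  sc (u1^T *m u1) = 1 -> sc (u2^T *m u2) = 1 -> sc (u1^T *m u2) = 0 ->
  (* angles *)
  0 <= al -> al <= be -> be <= pi / 2 ->
  h01 = vnorm h01 *: xth u1 u2 al ->
  h02 = vnorm h02 *: xth u1 u2 be ->
  (* theta_s maximizes phi on [alpha, beta] *)
  let P1 := vnorm h01 ^+ 2 * PS1 in
  let P2 := vnorm h02 ^+ 2 * PS2 in
  let phi := fun th : R => P1 * cos (th - al) ^+ 2 + P2 * cos (th - be) ^+ 2 in
  al <= ths -> ths <= be ->
  (forall th, al <= th -> th <= be -> phi th <= phi ths) ->
  let B10 := Bth PS1 PS2 PUp h01 h02 h1 u1 u2 ths in
  let B11 := Bth PS1 PS2 PUp h01 h02 h1 u1 u2 al in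
  let B12 := Bth PS1 PS2 PUp h01 h02 h1 u1 u2 be in
  let Bt2 := B2 PS1 PS2 PUp h01 h02 in
  let W := Wf h1 in
  let RR := rate_region PS1 PS2 h01 h02 h1 in
  let Ro := Ropt PS1 PS2 PUp h01 h02 h1 in
  (* (a) upper-layer noise dominates *)
  ((forall B1, B1 \in [:: B10; B11; B12] -> W B1 <= W Bt2 /\ 1 <= W B1) ->
   let Q := closure (conv_hull (RR B10 `|` RR B11 `|` RR B12)) in
   [/\ maxR1 Q >= maxR1 Ro - 1 / 2,
       maxR2 Q >= maxR2 Ro - 1 / 2 &
       maxRsum Q >= maxRsum Ro - 1 / 2])
  /\
  (* (b) lower-layer noise dominates *)
  ((forall B1, B1 \in [:: B10; B11; B12] -> W B1 <= W Bt2 /\ W Bt2 <= 1) ->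
   let Q := RR Bt2 in
   [/\ maxR1 Q >= maxR1 Ro - 1 / 2,
       maxR2 Q >= maxR2 Ro - 1 / 2 &
       maxRsum Q >= maxRsum Ro - 1 / 2]).
Proof.
move=> PS1p PS2p PUp0 h01p h02p h1p u11 u22 u12 al0 albe bepi h01E h02E P1 P2 phi
  alths thsbe Hmax B10 B11 B12 Bt2 W RR Ro.
have o1 : \sum_k u1 k 0 ^+ 2 = 1.
  by rewrite -u11 sc_mul; apply: eq_bigr => k _; rewrite mxE expr2.
have o2 : \sum_k u2 k 0 ^+ 2 = 1.
  by rewrite -u22 sc_mul; apply: eq_bigr => k _; rewrite mxE expr2.
have o12 : \sum_k u1 k 0 * u2 k 0 = 0.
  by rewrite -[RHS]u12 sc_mul; apply: eq_bigr => k _; rewrite mxE.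
have E1 k : h01 k 0 = vnorm h01 * (cos al * u1 k 0 + sin al * u2 k 0).
  by rewrite {1}h01E !mxE.
have E2 k : h02 k 0 = vnorm h02 * (cos be * u1 k 0 + sin be * u2 k 0).
  by rewrite {1}h02E !mxE.
have pi0 : 0 < pi :> R := pi_gt0 R.
have bpi : be <= al + pi / 2 by lra.
have PS1n := ltW PS1p; have PS2n := ltW PS2p.
have WE b : W b = Wv h1 b := WfE h1 b.
have HX1 b : X1v PS1 h1 h01 b <= P1 := X1_le_a _ _ _ _ _ _ _ _ PS1n o1 o2 o12 E1.
have HX2 b : X1v PS2 h1 h02 b <= P2 := X1_le_a _ _ _ _ _ _ _ _ PS2n o1 o2 o12 E2.
have HXs b : X1v PS1 h1 h01 b + X1v PS2 h1 h02 b <= phi ths :=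
  Xsum_le_a _ _ _ _ _ _ _ _ _ _ _ _ _ PS1n PS2n o1 o2 o12 E1 E2 albe bpi Hmax.
have P1n : 0 <= P1 by apply: mulr_ge0 => //; apply: sqr_ge0.
have P2n : 0 <= P2 by apply: mulr_ge0 => //; apply: sqr_ge0.
have phin : 0 <= phi ths.
  by rewrite /phi; apply: addr_ge0; apply: mulr_ge0 => //; apply: sqr_ge0.
have fst_lin : forall p : R * R, p.1 = 1 * p.1 + 0 * p.2 by move=> p; ring.
have snd_lin : forall p : R * R, p.2 = 0 * p.1 + 1 * p.2 by move=> p; ring.
have sum_lin : forall p : R * R, p.1 + p.2 = 1 * p.1 + 1 * p.2 by move=> p; ring.
have k01 : 0 <= (0 : R) <= 1 by apply/andP; split; lra.
have k11 : 0 <= (1 : R) <= 1 by apply/andP; split; lra.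
split.
-
  move=> Ha Q.
  have [c0 Hc0] := Bth_y PS1 PS2 PUp h01 h02 h1 u1 u2 ths h1p.
  have [c1 Hc1] := Bth_y PS1 PS2 PUp h01 h02 h1 u1 u2 al h1p.
  have [c2 Hc2] := Bth_y PS1 PS2 PUp h01 h02 h1 u1 u2 be h1p.
  have [N01 N02 W0] := Bth_vals _ _ _ _ _ _ _ o1 o2 o12 Hc0.
  have [N11 N12 W1] := Bth_vals _ _ _ _ _ _ _ o1 o2 o12 Hc1.
  have [N21 N22 W2] := Bth_vals _ _ _ _ _ _ _ o1 o2 o12 Hc2.
  rewrite cos2Dsin2 mulr1 in W0; rewrite cos2Dsin2 mulr1 in W1; rewrite cos2Dsin2 mulr1 in W2.
  have w0 : 1 <= c0 ^+ 2 by rewrite -W0 -WE; case: (Ha B10 ltac:(by rewrite !inE eqxx ?orbT)) => _ hh; exact: hh.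
  have w1 : 1 <= c1 ^+ 2 by rewrite -W1 -WE; case: (Ha B11 ltac:(by rewrite !inE eqxx ?orbT)) => _ hh; exact: hh.
  have w2 : 1 <= c2 ^+ 2 by rewrite -W2 -WE; case: (Ha B12 ltac:(by rewrite !inE eqxx ?orbT)) => _ hh; exact: hh.
  have QB f k1 k2 := @Qbound3 R n PS1 PS2 h01 h02 h1 B10 B11 B12 f k1 k2 PS1n PS2n.
  have c0p : 0 < c0 ^+ 2 + 1 by have := sqr_ge0 c0; lra.
  have c1p : 0 < c1 ^+ 2 + 1 by have := sqr_ge0 c1; lra.
  have c2p : 0 < c2 ^+ 2 + 1 by have := sqr_ge0 c2; lra.
  split.
  + rewrite /maxR1.
    apply: (@wrap R n PS1 PS2 PUp h01 h02 h1 Q (fun p => p.1) 1 0 (Cap P1) _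
              (Cap (X1v PS1 h1 h01 B11), 0) PS1n PS2n fst_lin).
    * move=> b p _ /RR_iff [_ _ h _ _] /=; apply: le_trans h _.
      by apply: Cap_le; [exact: X1v_ge0 | exact: HX1].
    * apply: in_clhull; left; right.
      by case: (@RR_pts R n PS1 PS2 h01 h02 h1 B11 PS1n PS2n) => _ hh _ _.
    * move=> p Hp; exact: (QB _ _ _ fst_lin k11 k01 p Hp).
    * rewrite /=; apply: Cap_half => //; first exact: X1v_ge0.
      rewrite /X1v (Nv_xth _ _ _ _ _ _ _ E1) N11 N12 W1.
      have -> : cos al * (c1 * cos al) + sin al * (c1 * sin al) = c1.
        by rewrite -[RHS]mulr1 -(cos2Dsin2 al); ring.
      rewrite mulrA ler_pdivlMr // /P1.
      have g : 0 <= vnorm h01 ^+ 2 * PS1 * (c1 ^+ 2 - 1) by apply: mulr_ge0 => //; lra.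
      have -> : 2 * ((vnorm h01 * c1) ^+ 2 * PS1) =
                vnorm h01 ^+ 2 * PS1 * (c1 ^+ 2 + 1) + vnorm h01 ^+ 2 * PS1 * (c1 ^+ 2 - 1) by ring.
      lra.
  + rewrite /maxR2.
    apply: (@wrap R n PS1 PS2 PUp h01 h02 h1 Q (fun p => p.2) 0 1 (Cap P2) _
              (0, Cap (X1v PS2 h1 h02 B12)) PS1n PS2n snd_lin).
    * move=> b p _ /RR_iff [_ _ _ h _] /=; apply: le_trans h _.
      by apply: Cap_le; [exact: X1v_ge0 | exact: HX2].
    * apply: in_clhull; right.
      by case: (@RR_pts R n PS1 PS2 h01 h02 h1 B12 PS1n PS2n) => _ _ hh _.
    * move=> p Hp; exact: (QB _ _ _ snd_lin k01 k11 p Hp).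
    * rewrite /=; apply: Cap_half => //; first exact: X1v_ge0.
      rewrite /X1v (Nv_xth _ _ _ _ _ _ _ E2) N21 N22 W2.
      have -> : cos be * (c2 * cos be) + sin be * (c2 * sin be) = c2.
        by rewrite -[RHS]mulr1 -(cos2Dsin2 be); ring.
      rewrite mulrA ler_pdivlMr // /P2.
      have g : 0 <= vnorm h02 ^+ 2 * PS2 * (c2 ^+ 2 - 1) by apply: mulr_ge0 => //; lra.
      have -> : 2 * ((vnorm h02 * c2) ^+ 2 * PS2) =
                vnorm h02 ^+ 2 * PS2 * (c2 ^+ 2 + 1) + vnorm h02 ^+ 2 * PS2 * (c2 ^+ 2 - 1) by ring.
      lra.
  + rewrite /maxRsum.
    set X1 := X1v PS1 h1 h01 B10; set X2 := X1v PS2 h1 h02 B10.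
    apply: (@wrap R n PS1 PS2 PUp h01 h02 h1 Q (fun p => p.1 + p.2) 1 1 (Cap (phi ths)) _
              (Cap X1, Cap (X1 + X2) - Cap X1) PS1n PS2n sum_lin).
    * move=> b p _ /RR_iff [_ _ _ _ h] /=; apply: le_trans h _.
      apply: Cap_le; last exact: HXs.
      by apply: addr_ge0; exact: X1v_ge0.
    * apply: in_clhull; left; left.
      by case: (@RR_pts R n PS1 PS2 h01 h02 h1 B10 PS1n PS2n) => _ _ _ hh.
    * move=> p Hp; exact: (QB _ _ _ sum_lin k11 k11 p Hp).
    * rewrite /= [Cap X1 + _]addrC subrK; apply: Cap_half => //.
        by apply: addr_ge0; exact: X1v_ge0.
      rewrite /X1 /X2 /X1v (Nv_xth _ _ _ _ _ _ _ E1) (Nv_xth _ _ _ _ _ _ _ E2) N01 N02 W0.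
      rewrite /phi /P1 /P2 !cosB.
      have -> : cos al * (c0 * cos ths) + sin al * (c0 * sin ths) =
                c0 * (cos ths * cos al + sin ths * sin al) by ring.
      have -> : cos be * (c0 * cos ths) + sin be * (c0 * sin ths) =
                c0 * (cos ths * cos be + sin ths * sin be) by ring.
      move: (cos ths * cos al + sin ths * sin al) (cos ths * cos be + sin ths * sin be) => K1 K2.
      rewrite -mulrDl mulrA ler_pdivlMr //.
      set S := vnorm h01 ^+ 2 * PS1 * K1 ^+ 2 + vnorm h02 ^+ 2 * PS2 * K2 ^+ 2.
      have S0 : 0 <= S.
        rewrite /S; apply: addr_ge0; apply: mulr_ge0; try apply: sqr_ge0; apply: mulr_ge0 => //; apply: sqr_ge0.
      have g : 0 <= S * (c0 ^+ 2 - 1) by apply: mulr_ge0 => //; lra.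
      have -> : 2 * ((vnorm h01 * (c0 * K1)) ^+ 2 * PS1 + (vnorm h02 * (c0 * K2)) ^+ 2 * PS2) =
                S * (c0 ^+ 2 + 1) + S * (c0 ^+ 2 - 1) by rewrite /S; ring.
      lra.
-
  move=> Hb Q.
  have wb : Wv h1 Bt2 <= 1.
    by rewrite -WE; case: (Hb B10 ltac:(by rewrite !inE eqxx ?orbT)) => _ hh; exact: hh.
  have NB1 b : feasible PS1 PS2 PUp h01 h02 b ->
      Nv h1 h01 b ^+ 2 * PS1 <= Nv h1 h01 Bt2 ^+ 2 * PS1.
    by move=> Fb; rewrite ler_wpM2r //; exact: Nv_B2.
  have NB2 b : feasible PS1 PS2 PUp h01 h02 b ->
      Nv h1 h02 b ^+ 2 * PS2 <= Nv h1 h02 Bt2 ^+ 2 * PS2.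
    by move=> Fb; rewrite ler_wpM2r //; exact: Nv_B2.
  have G1 := X1_ge_half _ h1 h01 _ PS1n wb.
  have G2 := X1_ge_half _ h1 h02 _ PS2n wb.
  have N1n : 0 <= Nv h1 h01 Bt2 ^+ 2 * PS1 by apply: mulr_ge0 => //; apply: sqr_ge0.
  have N2n : 0 <= Nv h1 h02 Bt2 ^+ 2 * PS2 by apply: mulr_ge0 => //; apply: sqr_ge0.
  have QB p k1 k2 : 0 <= k1 <= 1 -> 0 <= k2 <= 1 -> Q p -> k1 * p.1 + k2 * p.2 <=
      Cap (X1v PS1 h1 h01 Bt2 + X1v PS2 h1 h02 Bt2).
    by move=> h1k h2k Hp; exact: (RR_f_le _ _ _ _ _ _ _ _ _ h1k h2k Hp).
  split.
  + rewrite /maxR1.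
    apply: (@wrap R n PS1 PS2 PUp h01 h02 h1 Q (fun p => p.1) 1 0
              (Cap (Nv h1 h01 Bt2 ^+ 2 * PS1)) _
              (Cap (X1v PS1 h1 h01 Bt2), 0) PS1n PS2n fst_lin).
    * move=> b p Fb /RR_iff [_ _ h _ _] /=; apply: le_trans h _.
      apply: Cap_le; first exact: X1v_ge0.
      exact: le_trans (X1_le_num _ _ _ _ PS1n) (NB1 b Fb).
    * by case: (@RR_pts R n PS1 PS2 h01 h02 h1 Bt2 PS1n PS2n) => _ hh _ _.
    * move=> p Hp; rewrite fst_lin; exact: (QB _ _ _ k11 k01 Hp).
    * by rewrite /=; apply: Cap_half => //; exact: X1v_ge0.
  + rewrite /maxR2.
    apply: (@wrap R n PS1 PS2 PUp h01 h02 h1 Q (fun p => p.2) 0 1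
              (Cap (Nv h1 h02 Bt2 ^+ 2 * PS2)) _
              (0, Cap (X1v PS2 h1 h02 Bt2)) PS1n PS2n snd_lin).
    * move=> b p Fb /RR_iff [_ _ _ h _] /=; apply: le_trans h _.
      apply: Cap_le; first exact: X1v_ge0.
      exact: le_trans (X1_le_num _ _ _ _ PS2n) (NB2 b Fb).
    * by case: (@RR_pts R n PS1 PS2 h01 h02 h1 Bt2 PS1n PS2n) => _ _ hh _.
    * move=> p Hp; rewrite snd_lin; exact: (QB _ _ _ k01 k11 Hp).
    * by rewrite /=; apply: Cap_half => //; exact: X1v_ge0.
  + rewrite /maxRsum.
    set X1 := X1v PS1 h1 h01 Bt2; set X2 := X1v PS2 h1 h02 Bt2.
    apply: (@wrap R n PS1 PS2 PUp h01 h02 h1 Q (fun p => p.1 + p.2) 1 1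
              (Cap (Nv h1 h01 Bt2 ^+ 2 * PS1 + Nv h1 h02 Bt2 ^+ 2 * PS2)) _
              (Cap X1, Cap (X1 + X2) - Cap X1) PS1n PS2n sum_lin).
    * move=> b p Fb /RR_iff [_ _ _ _ h] /=; apply: le_trans h _.
      apply: Cap_le; first by apply: addr_ge0; exact: X1v_ge0.
      apply: lerD.
        exact: le_trans (X1_le_num _ _ _ _ PS1n) (NB1 b Fb).
      exact: le_trans (X1_le_num _ _ _ _ PS2n) (NB2 b Fb).
    * by case: (@RR_pts R n PS1 PS2 h01 h02 h1 Bt2 PS1n PS2n) => _ _ _ hh.
    * move=> p Hp; rewrite sum_lin; exact: (QB _ _ _ k11 k11 Hp).
    * rewrite /= [Cap X1 + _]addrC subrK; apply: Cap_half.
      - exact: addr_ge0.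
      - by apply: addr_ge0; exact: X1v_ge0.
      - rewrite /X1 /X2; lra.
Qed.
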